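(* Let $s\ge1$ and let $A:[0,\infty)\to\mathbb R$ be continuous with $A(t)\ge-(t+1)^s$ for all $t\ge0$. Let $(d,\rho)$ solve $$\dot d=-\tfrac12 d^2+A(t)\rho^2-\rho+1,\qquad \dot\rho=-d\rho,$$ and let $(b,a)$ solve $$\dot b=-\tfrac12 b^2-(t+1)^s a^2-a+1,\qquad \dot a=-ba.$$ If $b(0)<d(0)$ and $0<\rho(0)<a(0)$, then $b(t)<d(t)$ and $0<\rho(t)<a(t)$ for all $t>0$ at which both solutions are defined. *)

(* Defs.v *)
From Stdlib Require Import Reals.
From Coquelicot Require Import Coquelicot.
Open Scope R_scope.

Definition solves_on (T : Rbar) (f f' : R -> R) : Prop :=
  (forall t, 0 < t -> Rbar_lt t T -> is_derive f t (f' t)) /\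
  filterlim f (at_right 0) (locally (f 0)).

Definition sol_drho (A : R -> R) (T : Rbar) (d rho : R -> R) : Prop :=
  solves_on T d (fun t => - / 2 * (d t)^2 + A t * (rho t)^2 - rho t + 1) /\
  solves_on T rho (fun t => - d t * rho t).

Definition sol_ba (s : R) (T : Rbar) (b a : R -> R) : Prop :=
  solves_on T b (fun t => - / 2 * (b t)^2 - Rpower (t + 1) s * (a t)^2 - a t + 1) /\
  solves_on T a (fun t => - b t * a t).

Definition continuous_on_nonneg (A : R -> R) : Prop :=
  (forall t, 0 < t -> continuous A t) /\
  filterlim A (at_right 0) (locally (A 0)).

(* Main.v *)
Require Import Defs.
From Stdlib Require Import Reals Lra Psatz Classical.
From Coquelicot Require Import Coquelicot.
Open Scope R_scope.

Lemma loc_abs (c e : R) : 0 < e -> locally c (fun z => Rabs (z - c) < e).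
Proof. intros He. exists (mkposreal e He). intros y Hy. exact Hy. Qed.

Lemma cont_der (f : R -> R) x l : is_derive f x l -> continuity_pt f x.
Proof. intros H. apply continuity_pt_filterlim. exact (ex_derive_continuous f x (ex_intro _ l H)). Qed.

Lemma pos_near (f : R -> R) x : continuity_pt f x -> 0 < f x ->
  exists del, 0 < del /\ forall y, Rabs (y - x) < del -> 0 < f y.
Proof.
  intros Hc Hf. destruct (Hc (f x) Hf) as [alp [Ha Hb]].
  exists alp; split; [exact Ha|]. intros y Hy.
  destruct (Req_dec x y) as [<-|Hne]; [exact Hf|].
  assert (Hd := Hb y (conj (conj I Hne) Hy)). simpl in Hd. unfold R_dist in Hd.
  apply Rabs_def2 in Hd. lra.
Qed.

Lemma cont_ind (a0 b0 : R) (P : R -> Prop) : a0 <= b0 -> P a0 ->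
  (forall x, a0 < x <= b0 -> (forall y, a0 <= y < x -> P y) -> P x) ->
  (forall x, a0 <= x < b0 -> P x -> exists del, 0 < del /\ forall y, x < y < x + del -> P y) ->
  P b0.
Proof.
  intros Hab Pa Hstep Hopen.
  set (E := fun x => a0 <= x <= b0 /\ forall y, a0 <= y <= x -> P y).
  assert (Hb : bound E). { exists b0. intros x [[_ H] _]. exact H. }
  assert (Ea : E a0). { split; [lra|]. intros y Hy. replace y with a0 by lra. exact Pa. }
  destruct (completeness E Hb (ex_intro _ a0 Ea)) as [m [Hub Hlub]].
  assert (Ham : a0 <= m) by (apply Hub; exact Ea).
  assert (Hmb : m <= b0). { apply Hlub. intros x [[_ H] _]. exact H. }
  assert (Hbel : forall y, a0 <= y < m -> P y).
  { intros y Hy. destruct (classic (exists x, E x /\ y <= x)) as [[x [[_ Hx] Hyx]]|Hn].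
    - apply Hx. lra.
    - exfalso. assert (m <= y); [|lra]. apply Hlub. intros x Ex.
      destruct (Rle_lt_dec x y) as [H|H]; [exact H|]. exfalso. apply Hn. exists x. split; [exact Ex|lra]. }
  assert (Pm : P m).
  { destruct (Req_dec m a0) as [->|Hne]; [exact Pa|]. apply Hstep; [lra|exact Hbel]. }
  assert (Em : E m).
  { split; [lra|]. intros y Hy. destruct (Req_dec y m) as [->|Hne]; [exact Pm|]. apply Hbel; lra. }
  destruct (Req_dec m b0) as [<-|Hne]; [exact Pm|].
  destruct (Hopen m (conj Ham (ltac:(destruct Hmb; [assumption|contradiction]) : m < b0)) Pm) as [del [Hdel Hd]].
  set (z := Rmin (m + del/2) b0).
  assert (Hz1 : m < z). { unfold z. apply Rmin_glb_lt; lra. }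
  assert (Hz2 : z <= m + del/2) by apply Rmin_l.
  assert (Hz3 : z <= b0) by apply Rmin_r.
  assert (Ez : E z).
  { split; [lra|]. intros y Hy. destruct (Rle_lt_dec y m) as [H|H].
    - apply Em. lra.
    - apply Hd. lra. }
  assert (z <= m) by (apply Hub; exact Ez). lra.
Qed.

Lemma grow (w w' : R -> R) (M e x : R): e < x ->
  (forall y, e < y < x -> is_derive w y (w' y)) ->
  (forall y, e <= y <= x -> continuity_pt w y) ->
  (forall y, e < y < x -> w' y >= - M * w y) -> 0 < w e -> 0 < w x.
Proof.
  intros Hex Hd Hc Hw Hpos.
  set (g := fun y => w y * exp (M*y)).
  assert (Hexp : forall y, is_derive (fun y => exp (M*y)) y (M * exp(M*y))).
  { intros. auto_derive. trivial. ring. }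
  destruct (MVT_gen g e x (fun y => Rmax 0 (w' y * exp (M*y) + w y * (M * exp (M*y))))) as [c [Hc' Heq]].
  - rewrite Rmin_left, Rmax_right by lra. intros y Hy.
    rewrite Rmax_right.
    + exact (is_derive_mult w (fun y => exp (M*y)) y (w' y) (M * exp (M*y)) (Hd y Hy) (Hexp y) Rmult_comm).
    + pose proof (Hw y Hy). pose proof (exp_pos (M*y)). nra.
  - rewrite Rmin_left, Rmax_right by lra. intros y Hy. unfold g.
    apply continuity_pt_mult; [apply Hc; lra|]. exact (cont_der _ _ _ (Hexp y)).
  - pose proof (Rmax_l 0 (w' c * exp (M*c) + w c * (M * exp (M*c)))) as H1.
    unfold g in Heq. pose proof (exp_pos (M*e)) as H2. pose proof (exp_pos (M*x)) as H3.
    assert (H4 : 0 <= w x * exp (M * x) - w e * exp (M * e)) by (rewrite Heq; nra).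
    destruct (Rle_lt_dec (w x) 0) as [H|H]; [|exact H]. nra.
Qed.

Theorem lemma4p4 (s : R) (A d rho b a : R -> R) (T1 T2 : Rbar) :
  1 <= s ->
  continuous_on_nonneg A ->
  (forall t, 0 <= t -> A t >= - Rpower (t + 1) s) ->
  Rbar_lt 0 T1 -> sol_drho A T1 d rho ->
  Rbar_lt 0 T2 -> sol_ba s T2 b a ->
  b 0 < d 0 -> 0 < rho 0 -> rho 0 < a 0 ->
  forall t, 0 < t -> Rbar_lt t T1 -> Rbar_lt t T2 ->
    b t < d t /\ 0 < rho t /\ rho t < a t.
Proof.
  intros Hs HA HAb HT1 [[Dd Cd0] [Dr Cr0]] HT2 [[Db Cb0] [Da Ca0]] H0 H1 H2 t Ht Ht1 Ht2.
  assert (Tin : forall y, 0 < y <= t -> Rbar_lt y T1 /\ Rbar_lt y T2).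
  { intros y Hy. destruct T1 as [T1| |], T2 as [T2| |]; simpl in *; split; try lra; tauto. }
  set (g := Rmin (d 0 - b 0) (Rmin (rho 0) (a 0 - rho 0))).
  assert (Hg : 0 < g). { unfold g. repeat apply Rmin_glb_lt; lra. }
  assert (Hg1 : g <= d 0 - b 0) by apply Rmin_l.
  assert (Hg2 : g <= rho 0) by (unfold g; eapply Rle_trans; [apply Rmin_r| apply Rmin_l]).
  assert (Hg3 : g <= a 0 - rho 0) by (unfold g; eapply Rle_trans; [apply Rmin_r| apply Rmin_r]).
  assert (Hg' : 0 < g/2) by lra.
  assert (Fd : at_right 0 (fun y => Rabs (d y - d 0) < g/2)) by exact (Cd0 _ (loc_abs (d 0) _ Hg')).
  assert (Fb : at_right 0 (fun y => Rabs (b y - b 0) < g/2)) by exact (Cb0 _ (loc_abs (b 0) _ Hg')).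
  assert (Fr : at_right 0 (fun y => Rabs (rho y - rho 0) < g/2)) by exact (Cr0 _ (loc_abs (rho 0) _ Hg')).
  assert (Fa : at_right 0 (fun y => Rabs (a y - a 0) < g/2)) by exact (Ca0 _ (loc_abs (a 0) _ Hg')).
  assert (Ft : at_right 0 (fun y => 0 < y < t)).
  { exists (mkposreal t Ht). intros y Hy Hy0. simpl in Hy.
    unfold ball in Hy; simpl in Hy; unfold AbsRing_ball, abs, minus, plus, opp in Hy; simpl in Hy.
    apply Rabs_def2 in Hy. lra. }
  destruct (filter_ex _ (filter_and _ _ Ft (filter_and _ _ Fd (filter_and _ _ Fb (filter_and _ _ Fr Fa)))))
    as [eps [Heps [Ed [Eb [Er Ea]]]]].
  apply Rabs_def2 in Ed, Eb, Er, Ea.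
  set (P := fun y => b y < d y /\ 0 < rho y /\ rho y < a y).
  change (P t).
  assert (Der : forall y, 0 < y <= t ->
     is_derive d y (- / 2 * (d y)^2 + A y * (rho y)^2 - rho y + 1) /\
     is_derive rho y (- d y * rho y) /\
     is_derive b y (- / 2 * (b y)^2 - Rpower (y + 1) s * (a y)^2 - a y + 1) /\
     is_derive a y (- b y * a y)).
  { intros y Hy. destruct (Tin y Hy) as [Hy1 Hy2].
    split; [apply Dd|split; [apply Dr|split; [apply Db|apply Da]]]; tauto. }
  assert (Cont : forall y, 0 < y <= t -> continuity_pt d y /\ continuity_pt rho y /\
     continuity_pt b y /\ continuity_pt a y).
  { intros y Hy. destruct (Der y Hy) as [X1 [X2 [X3 X4]]].
    repeat split; eapply cont_der; eassumption. }
  apply (cont_ind eps t P); [lra| unfold P; lra | |].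
  - intros x Hx HP.
    assert (Ccomp : forall y, eps <= y <= x -> continuity_pt (fun y => Rabs (d y) + Rabs (b y)) y).
    { intros y Hy. destruct (Cont y ltac:(lra)) as [C1 [_ [C3 _]]].
      apply continuity_pt_plus;
      [apply (continuity_pt_comp d Rabs)|apply (continuity_pt_comp b Rabs)];
      try assumption; apply Rcontinuity_abs. }
    destruct (continuity_ab_maj _ eps x ltac:(lra) Ccomp) as [xm [HM _]].
    set (M := Rabs (d xm) + Rabs (b xm)).
    assert (Bd : forall y, eps <= y <= x -> d y <= M /\ b y <= M).
    { intros y Hy. pose proof (HM y Hy). pose proof (Rle_abs (d y)). pose proof (Rle_abs (b y)).
      pose proof (Rabs_pos (d y)). pose proof (Rabs_pos (b y)). unfold M. lra. }
    assert (Hrho : 0 < rho x).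
    { apply (grow rho (fun y => - d y * rho y) M eps x); [lra| | | |lra].
      - intros y Hy. apply (Der y). lra.
      - intros y Hy. apply (Cont y). lra.
      - intros y Hy. destruct (HP y ltac:(lra)) as [P1 [P2 P3]]. destruct (Bd y ltac:(lra)).
        nra. }
    assert (Hu : 0 < d x - b x).
    { apply (grow (fun y => d y - b y)
        (fun y => (- / 2 * (d y)^2 + A y * (rho y)^2 - rho y + 1) -
                  (- / 2 * (b y)^2 - Rpower (y + 1) s * (a y)^2 - a y + 1)) M eps x); [lra| | | |lra].
      - intros y Hy. destruct (Der y ltac:(lra)) as [X1 [_ [X3 _]]].
        exact (is_derive_minus _ _ _ _ _ X1 X3).
      - intros y Hy. destruct (Cont y ltac:(lra)) as [X1 [_ [X3 _]]]. apply continuity_pt_minus; assumption.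
      - intros y Hy. destruct (HP y ltac:(lra)) as [P1 [P2 P3]]. destruct (Bd y ltac:(lra)).
        assert (HR : 0 < Rpower (y + 1) s) by (unfold Rpower; apply exp_pos).
        pose proof (HAb y ltac:(lra)) as HAy.
        assert (Q1 : 0 <= (A y + Rpower (y + 1) s) * (rho y)^2) by (apply Rmult_le_pos; nra).
        assert (Q2 : 0 <= Rpower (y + 1) s * ((a y - rho y) * (a y + rho y))) by (apply Rmult_le_pos; nra).
        assert (Q3 : 0 <= (M + M - d y - b y) * (d y - b y)) by (apply Rmult_le_pos; nra).
        nra. }
    assert (Hv : 0 < a x - rho x).
    { apply (grow (fun y => a y - rho y) (fun y => (- b y * a y) - (- d y * rho y)) M eps x); [lra| | | |lra].
      - intros y Hy. destruct (Der y ltac:(lra)) as [_ [X2 [_ X4]]].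
        exact (is_derive_minus _ _ _ _ _ X4 X2).
      - intros y Hy. destruct (Cont y ltac:(lra)) as [_ [X2 [_ X4]]]. apply continuity_pt_minus; assumption.
      - intros y Hy. destruct (HP y ltac:(lra)) as [P1 [P2 P3]]. destruct (Bd y ltac:(lra)).
        assert (Q1 : 0 <= rho y * (d y - b y)) by (apply Rmult_le_pos; nra).
        assert (Q2 : 0 <= (M - b y) * (a y - rho y)) by (apply Rmult_le_pos; nra).
        nra. }
    unfold P; lra.
  - intros x Hx [P1 [P2 P3]].
    destruct (Cont x ltac:(lra)) as [C1 [C2 [C3 C4]]].
    destruct (pos_near (fun y => d y - b y) x (continuity_pt_minus _ _ _ C1 C3) ltac:(lra)) as [e1 [He1 N1]].
    destruct (pos_near rho x C2 P2) as [e2 [He2 N2]].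
    destruct (pos_near (fun y => a y - rho y) x (continuity_pt_minus _ _ _ C4 C2) ltac:(lra)) as [e3 [He3 N3]].
    exists (Rmin e1 (Rmin e2 e3)). split; [repeat apply Rmin_glb_lt; lra|].
    intros y Hy.
    pose proof (Rmin_l e1 (Rmin e2 e3)). pose proof (Rmin_r e1 (Rmin e2 e3)).
    pose proof (Rmin_l e2 e3). pose proof (Rmin_r e2 e3).
    assert (Ry : forall e, Rmin e1 (Rmin e2 e3) <= e -> Rabs (y - x) < e).
    { intros e He. apply Rabs_def1; lra. }
    pose proof (N1 y (Ry e1 ltac:(lra))). pose proof (N2 y (Ry e2 ltac:(lra))).
    pose proof (N3 y (Ry e3 ltac:(lra))). unfold P; lra.
Qed.
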